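(* Given a set cover instance with ground set $E$ ($|E|=n$) and sets $X_1,\dots,X_m$ with $\bigcup_i X_i=E$, let $I$ be the 2-D Euclidean g2g-anycast instance constructed from it as described in the context. If an optimal solution of $I$ has cost $C$, then the set cover instance has a cover using at most $C/2$ sets.
   Context: In 2-D Euclidean g2g-anycast ($\kappa=2$), the nodes are points in $\mathbb{R}^2$, there is a source group $S$ and destination groups with demands $(S,T)$, and broadcast and funnel costs are both $\|u-v\|^2$. A solution assigns to each $s\in S$ a radius $\rho_s\ge0$, a set $A_s$ of nodes with $\|s-t\|^2\le\rho_s$ for $t\in A_s$, and a tree $H_s$ on nodes containing $\{s\}\cup A_s$. It is feasible if every destination group meets some $A_s$. Its cost is $\sum_s\rho_s+\sum_s\sum_{uv\in H_s}\|u-v\|^2$. Construction of $I$: - Choose points $x_1,\dots,x_m\in\mathbb{R}^2$ with pairwise distances at least $D$, where $(D-2)^2>2m$. - For each $i$, choose a point $y_i$ with $\|x_i-y_i\|=1$. - The source group is $S=\{x_1,\dots,x_m\}$. - For each element $e\in E$, the destination group $T_e$ consists of one terminal node $t(e)_i$ located at $y_i$ for each $i$ with $e\in X_i$. - The demands are $(S,T_e)$ for all $e\in E$. *)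

(* Defs.v *)
From HB Require Import structures.
From mathcomp Require Import all_boot all_order all_algebra.
Set Implicit Arguments. Unset Strict Implicit. Unset Printing Implicit Defensive.
Import Order.TTheory GRing.Theory Num.Theory.
Local Open Scope ring_scope.

Definition pt (R : rcfType) := (R * R)%type.
Definition sqdist (R : rcfType) (p q : pt R) : R :=
  (p.1 - q.1) ^+ 2 + (p.2 - q.2) ^+ 2.
Definition dist (R : rcfType) (p q : pt R) : R := Num.sqrt (sqdist p q).

Section Instance.
Variables (E : finType) (m : nat) (X : 'I_m -> {set E}).

(* terminal nodes t(e)_i, one for each pair (e,i) with e \in X_i *)
Definition term_idx := {p : E * 'I_m | p.1 \in X p.2}.
(* the nodes of I: sources x_i (inl i) and terminals t(e)_i (inr _) *)
Definition node := ('I_m + term_idx)%type.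
Definition src (i : 'I_m) : node := inl i.
Definition in_group (e : E) (t : node) : bool :=
  match t with inr p => (val p).1 == e | inl _ => false end.

Variables (R : rcfType) (x y : 'I_m -> pt R).

Definition pos (v : node) : pt R :=
  match v with inl i => x i | inr p => y (val p).2 end.
Definition ncost (u v : node) : R := (dist (pos u) (pos v)) ^+ 2.

(* Undirected edges {u,v} are encoded as ordered pairs (u,v) with
   enum_rank u < enum_rank v (canonical orientation). *)
Definition adj (F : {set node * node}) : rel node :=
  fun u v => ((u, v) \in F) || ((v, u) \in F).

Definition is_tree (V : {set node}) (F : {set node * node}) : Prop :=
  [/\ V != set0,
      {in F, forall p : node * node,
          [/\ p.1 \in V, p.2 \in V & (enum_rank p.1 < enum_rank p.2)%N]},
      {in V &, forall u v, connect (adj F) u v}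
    & #|F| = #|V|.-1].

Definition valid_sol (rho : 'I_m -> R) (A V : 'I_m -> {set node})
    (F : 'I_m -> {set node * node}) : Prop :=
  forall s : 'I_m,
    [/\ 0 <= rho s,
        {in A s, forall t, ncost (src s) t <= rho s},
        src s \in V s,
        A s \subset V s
      & is_tree (V s) (F s)].

Definition feasible (A : 'I_m -> {set node}) : Prop :=
  forall e : E, exists s : 'I_m, exists2 t, t \in A s & in_group e t.

Definition sol_cost (rho : 'I_m -> R) (F : 'I_m -> {set node * node}) : R :=
  \sum_(s < m) rho s + \sum_(s < m) \sum_(p in F s) ncost p.1 p.2.

End Instance.

(* Main.v *)
Require Import Defs.
From HB Require Import structures.
From mathcomp Require Import all_boot all_order all_algebra.
From Stdlib Require Import Lia.
From mathcomp Require Import ring lra zify.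
Set Implicit Arguments. Unset Strict Implicit.
Import Order.TTheory GRing.Theory Num.Theory.
Local Open Scope ring_scope.

Lemma sqdist_ge0 (R : rcfType) (p q : pt R) : 0 <= sqdist p q.
Proof. rewrite /sqdist; apply: addr_ge0; apply: sqr_ge0. Qed.

Lemma dist_ge0 (R : rcfType) (p q : pt R) : 0 <= dist p q.
Proof. exact: sqrtr_ge0. Qed.

Lemma dist_sqr (R : rcfType) (p q : pt R) : dist p q ^+ 2 = sqdist p q.
Proof. by rewrite /dist sqr_sqrtr // sqdist_ge0. Qed.

Lemma dist_sym (R : rcfType) (p q : pt R) : dist p q = dist q p.
Proof. rewrite /dist /sqdist; congr Num.sqrt; ring. Qed.

Lemma dist_tri (R : rcfType) (p q r : pt R) : dist p r <= dist p q + dist q r.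
Proof.
set a1 := p.1 - q.1; set a2 := p.2 - q.2; set b1 := q.1 - r.1; set b2 := q.2 - r.2.
have Hd1 : dist p q = Num.sqrt (a1^+2 + a2^+2) by [].
have Hd2 : dist q r = Num.sqrt (b1^+2 + b2^+2) by [].
have Hpr : sqdist p r = (a1^+2 + a2^+2) + (b1^+2+b2^+2) + 2 * (a1*b1 + a2*b2).
  rewrite /sqdist /a1 /a2 /b1 /b2; ring.
have HA : 0 <= a1^+2 + a2^+2 by apply: addr_ge0; apply: sqr_ge0.
have HB : 0 <= b1^+2 + b2^+2 by apply: addr_ge0; apply: sqr_ge0.
have CS : a1*b1 + a2*b2 <= dist p q * dist q r.
  rewrite Hd1 Hd2 -sqrtrM //.
  apply: (le_trans (ler_norm _)).
  rewrite -sqrtr_sqr ler_sqrt; last by apply: mulr_ge0.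
  have -> : (a1^+2 + a2^+2) * (b1^+2 + b2^+2) = (a1*b1+a2*b2)^+2 + (a1*b2 - a2*b1)^+2 by ring.
  by rewrite lerDl sqr_ge0.
have H1 := dist_ge0 p q; have H2 := dist_ge0 q r.
have E1 := dist_sqr p q; have E2 := dist_sqr q r.
have Hle : sqdist p r <= (dist p q + dist q r)^+2.
  rewrite Hpr; move: E1 E2; rewrite /sqdist -/a1 -/a2 -/b1 -/b2 => E1 E2.
  nra.
rewrite /dist; apply: (le_trans (y := Num.sqrt ((dist p q + dist q r)^+2))).
  by rewrite ler_sqrt // sqr_ge0.
by rewrite sqrtr_sqr ger0_norm //; lra.
Qed.

Lemma sum_ge_one (T : finType) (R : rcfType) (S : {set T}) (f : T -> R) a :
  (forall b, 0 <= f b) -> a \in S -> f a <= \sum_(b in S) f b.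
Proof.
move=> h0 ha; rewrite (bigD1 a) //= lerDl; apply: sumr_ge0 => b _; exact: h0.
Qed.

Theorem mainTheorem11 (R : rcfType) (E : finType) (m : nat)
    (X : 'I_m -> {set E})
    (hcover : \bigcup_(i < m) X i = [set: E])
    (D : R) (x y : 'I_m -> pt R)
    (hD0 : 0 <= D)
    (hsep : forall i j : 'I_m, i != j -> D <= dist (x i) (x j))
    (hD : 2 * m%:R < (D - 2) ^+ 2)
    (hy : forall i : 'I_m, dist (x i) (y i) = 1)
    (C : R)
    (rho : 'I_m -> R) (A V : 'I_m -> {set node X})
    (F : 'I_m -> {set node X * node X})
    (hvalid : valid_sol x y rho A V F)
    (hfeas : feasible A)
    (hcost : sol_cost x y rho F = C)
    (hopt : forall (rho' : 'I_m -> R) (A' V' : 'I_m -> {set node X})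
              (F' : 'I_m -> {set node X * node X}),
              valid_sol x y rho' A' V' F' -> feasible A' ->
              C <= sol_cost x y rho' F') :
  exists J : {set 'I_m},
    \bigcup_(i in J) X i = [set: E] /\ (#|J|%:R <= C / 2).
Proof.
have nc_ge0 : forall u v : node X, 0 <= ncost x y u v.
  by move=> u v; rewrite /ncost; apply: sqr_ge0.
have hmm : forall i s : 'I_m, i != s -> (2 <= m)%N.
  move=> [i hi] [s hs]; rewrite -val_eqE /= => ne.
  case: i s hi hs ne => [|i] [|s] //=; lia.
have hm2 : forall i s : 'I_m, i != s -> 2 <= D.
  move=> i s ne.
  have m2 := hmm _ _ ne.
  have : 2%:R <= m%:R :> R by rewrite ler_nat.
  move=> h2; nra.
have hfar : forall s i : 'I_m, i != s -> 2 * m%:R < dist (x s) (y i) ^+ 2.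
  move=> s i ne.
  have D2 := hm2 _ _ ne.
  have h1 := hsep s i (ltac:(by rewrite eq_sym)).
  have h2 := dist_tri (x s) (y i) (x i).
  rewrite [dist (y i) _]dist_sym hy in h2.
  have h3 := dist_ge0 (x s) (y i).
  nra.
have hone : forall s v, v != src X s -> 1 <= ncost x y (src X s) v.
  move=> s [j|t] ne; rewrite /ncost /=.
  - have nej : j != s by apply: contra ne => /eqP ->.
    have D2 := hm2 _ _ nej.
    have h1 := hsep s j (ltac:(by rewrite eq_sym)).
    nra.
  - case: (eqVneq (val t).2 s) => [->|nej]; first by rewrite hy expr1n.
    have := hfar s _ nej.
    have m2 := hmm _ _ nej.
    have : 2%:R <= m%:R :> R by rewrite ler_nat.
    move=> h; nra.
set c := fun s => rho s + \sum_(p in F s) ncost x y p.1 p.2.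
have hC : C = \sum_s c s by rewrite -hcost /sol_cost big_split.
have c_ge0 : forall s, 0 <= c s.
  move=> s; case: (hvalid s) => r0 _ _ _ _; apply: addr_ge0 => //.
  by apply: sumr_ge0 => p _.
case: (boolP [exists s, exists t : term_idx X, (inr t \in A s) && ((val t).2 != s)]).
  case/existsP => s /existsP [t /andP [tin ne]].
  exists setT; split.
    by rewrite -hcover; apply: eq_bigl => i; rewrite in_setT.
  rewrite cardsT card_ord.
  have h1 := hfar s _ ne.
  case: (hvalid s) => r0 hr _ _ _.
  have h2 := hr _ tin; rewrite /ncost /= in h2.
  have h3 : c s <= C by rewrite hC (bigD1 s) //= lerDl; apply: sumr_ge0 => *; apply: c_ge0.
  have h4 : rho s <= c s by rewrite /c lerDl; apply: sumr_ge0 => *.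
  lra.
rewrite negb_exists => /forallP hno.
have hidx : forall s (t : term_idx X), inr t \in A s -> (val t).2 = s.
  move=> s t tin; move: (hno s); rewrite negb_exists => /forallP /(_ t).
  by rewrite tin /= negbK => /eqP.
set J := [set s | [exists t : term_idx X, inr t \in A s]].
exists J; split.
  apply/setP => e; rewrite in_setT; apply/bigcupP.
  case: (hfeas e) => s [[j|t] tin //= /eqP te].
  exists s; first by rewrite inE; apply/existsP; exists t.
  have := valP t; rewrite te (hidx _ _ tin) //.
have cJ : forall s, s \in J -> 2 <= c s.
  move=> s; rewrite inE => /existsP [t tin].
  case: (hvalid s) => r0 hr sV AV [_ hF hconn _].
  have h1 := hr _ tin; rewrite /ncost /= (hidx _ _ tin) hy expr1n in h1.
  have tV : inr t \in V s by apply: (subsetP AV).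
  case/connectP: (hconn _ _ sV tV) => [[|w p]] /=.
    by move=> _ /esym.
  case/andP => hw _ _.
  have h2 : 1 <= \sum_(p in F s) ncost x y p.1 p.2.
    case/orP: hw => hw.
      case: (hF _ hw) => _ _ /= hlt.
      apply: le_trans (sum_ge_one (f := fun p : node X * node X => ncost x y p.1 p.2) (fun b => nc_ge0 _ _) hw) => /=.
      apply: hone; apply/eqP => ew; by rewrite ew ltnn in hlt.
    case: (hF _ hw) => _ _ /= hlt.
    apply: le_trans (sum_ge_one (f := fun p : node X * node X => ncost x y p.1 p.2) (fun b => nc_ge0 _ _) hw) => /=.
    rewrite /ncost dist_sym -/(ncost x y (src X s) w).
    apply: hone; apply/eqP => ew; by rewrite ew ltnn in hlt.
  rewrite /c; lra.
have : \sum_s (if s \in J then 2 else 0) <= C :> R.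
  rewrite hC; apply: ler_sum => s _; case: ifP => sJ; [exact: cJ | exact: c_ge0].
rewrite -big_mkcond /= sumr_const => h.
rewrite -mulr_natr in h.
move: h; lra.
Qed.
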